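(* Let $I$ be a nonempty directed set and let $\{\Delta_i\}_{i\in I}$ be a family of theories in a signature $\sigma$ such that each $\Delta_i$ is consistent and complete. Then $\liminf_I \Delta_i$ is consistent and $\limsup_I \Delta_i$ is complete. Moreover, the following are equivalent: (1) $\limsup_I \Delta_i$ is consistent; (2) $\liminf_I \Delta_i$ is complete; (3) $\lim_I \Delta_i$ exists.
   Context: Fix a first-order signature $\sigma$ and let $\mathrm{Sent}(\sigma)$ be the set of first-order sentences over $\sigma$ (with equality). A theory is a set $\Delta\subseteq \mathrm{Sent}(\sigma)$ such that $\Delta\vdash\theta$ implies $\theta\in\Delta$. A set of sentences is consistent if no contradiction is derivable from it (equivalently, its set of logical consequences is not all of $\mathrm{Sent}(\sigma)$), and complete if for every $\theta\in\mathrm{Sent}(\sigma)$ at least one of $\theta$, $\neg\theta$ belongs to it. A directed set is a partially ordered set $I$ such that any two elements have a common upper bound. For a family $\{\Delta_i\}_{i\in I}$ of sets of sentences indexed by a directed set $I$: $\limsup_I \Delta_i=\{\theta\in\mathrm{Sent}(\sigma): \forall i\in I\ \exists j\ge i\ [\theta\in\Delta_j]\}$, $\liminf_I \Delta_i=\{\theta\in\mathrm{Sent}(\sigma): \exists i\in I\ \forall j\ge i\ [\theta\in\Delta_j]\}$. We say $\lim_I\Delta_i$ exists and equals $\Delta$ if $\limsup_I\Delta_i=\liminf_I\Delta_i=\Delta$. *)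

(* Defs.v *)
From Stdlib Require Import List Vectors.Fin.
Import ListNotations.

Record signature : Type := {
  fsym : Type;
  fsym_ar : fsym -> nat;
  rsym : Type;
  rsym_ar : rsym -> nat
}.

Section Syntax.
Variable Sg : signature.

Inductive term : Type :=
| var : nat -> term
| func : forall f : fsym Sg, (Fin.t (fsym_ar Sg f) -> term) -> term.

Inductive form : Type :=
| Fal : form
| Rel : forall r : rsym Sg, (Fin.t (rsym_ar Sg r) -> term) -> form
| Equ : term -> term -> form
| Imp : form -> form -> form
| And : form -> form -> form
| Or  : form -> form -> form
| All : form -> form
| Ex  : form -> form.

Definition Neg (phi : form) : form := Imp phi Fal.

Fixpoint subst_term (s : nat -> term) (t : term) : term :=
  match t with
  | var n => s n
  | func f v => func f (fun i => subst_term s (v i))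
  end.

Definition shift_term : term -> term := subst_term (fun n => var (S n)).

Definition up (s : nat -> term) : nat -> term :=
  fun n => match n with 0 => var 0 | S m => shift_term (s m) end.

Fixpoint subst_form (s : nat -> term) (phi : form) : form :=
  match phi with
  | Fal => Fal
  | Rel r v => Rel r (fun i => subst_term s (v i))
  | Equ t1 t2 => Equ (subst_term s t1) (subst_term s t2)
  | Imp a b => Imp (subst_form s a) (subst_form s b)
  | And a b => And (subst_form s a) (subst_form s b)
  | Or a b => Or (subst_form s a) (subst_form s b)
  | All a => All (subst_form (up s) a)
  | Ex a => Ex (subst_form (up s) a)
  end.

Definition shift_form : form -> form := subst_form (fun n => var (S n)).

Definition inst (t : term) : nat -> term :=
  fun n => match n with 0 => t | S m => var m end.

Fixpoint bounded_term (k : nat) (t : term) : Prop :=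
  match t with
  | var n => n < k
  | func f v => forall i, bounded_term k (v i)
  end.

Fixpoint bounded_form (k : nat) (phi : form) : Prop :=
  match phi with
  | Fal => True
  | Rel r v => forall i, bounded_term k (v i)
  | Equ t1 t2 => bounded_term k t1 /\ bounded_term k t2
  | Imp a b | And a b | Or a b => bounded_form k a /\ bounded_form k b
  | All a | Ex a => bounded_form (S k) a
  end.

Definition sentence (phi : form) : Prop := bounded_form 0 phi.

Inductive prv : list form -> form -> Prop :=
| Ctx A phi : In phi A -> prv A phi
| ImpI A phi psi : prv (phi :: A) psi -> prv A (Imp phi psi)
| ImpE A phi psi : prv A (Imp phi psi) -> prv A phi -> prv A psi
| AllI A phi : prv (map shift_form A) phi -> prv A (All phi)
| AllE A phi t : prv A (All phi) -> prv A (subst_form (inst t) phi)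
| ExI A phi t : prv A (subst_form (inst t) phi) -> prv A (Ex phi)
| ExE A phi psi : prv A (Ex phi) ->
    prv (phi :: map shift_form A) (shift_form psi) -> prv A psi
| FalE A phi : prv A Fal -> prv A phi
| AndI A phi psi : prv A phi -> prv A psi -> prv A (And phi psi)
| AndE1 A phi psi : prv A (And phi psi) -> prv A phi
| AndE2 A phi psi : prv A (And phi psi) -> prv A psi
| OrI1 A phi psi : prv A phi -> prv A (Or phi psi)
| OrI2 A phi psi : prv A psi -> prv A (Or phi psi)
| OrE A phi psi chi : prv A (Or phi psi) -> prv (phi :: A) chi ->
    prv (psi :: A) chi -> prv A chi
| Peirce A phi psi : prv A (Imp (Imp (Imp phi psi) phi) phi)
| EqRefl A t : prv A (Equ t t)
| EqSubst A phi s t : prv A (Equ s t) -> prv A (subst_form (inst s) phi) ->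
    prv A (subst_form (inst t) phi).

Definition derives (Delta : form -> Prop) (theta : form) : Prop :=
  exists L : list form, (forall phi, In phi L -> Delta phi) /\ prv L theta.

Definition sentences (Delta : form -> Prop) : Prop :=
  forall phi, Delta phi -> sentence phi.

Definition is_theory (Delta : form -> Prop) : Prop :=
  sentences Delta /\
  (forall theta, sentence theta -> derives Delta theta -> Delta theta).

Definition consistent (Delta : form -> Prop) : Prop := ~ derives Delta Fal.

Definition complete (Delta : form -> Prop) : Prop :=
  forall theta, sentence theta -> Delta theta \/ Delta (Neg theta).

End Syntax.

Arguments var {Sg}.
Arguments Fal {Sg}.

Definition directed_set (I : Type) (le : I -> I -> Prop) : Prop :=
  (forall i, le i i) /\
  (forall i j k, le i j -> le j k -> le i k) /\
  (forall i j, le i j -> le j i -> i = j) /\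
  (forall i j, exists k, le i k /\ le j k).

Definition limsup {S : signature} {I : Type} (le : I -> I -> Prop)
  (D : I -> form S -> Prop) : form S -> Prop :=
  fun theta => sentence S theta /\ forall i, exists j, le i j /\ D j theta.

Definition liminf {S : signature} {I : Type} (le : I -> I -> Prop)
  (D : I -> form S -> Prop) : form S -> Prop :=
  fun theta => sentence S theta /\ exists i, forall j, le i j -> D j theta.

Definition lim_exists {S : signature} {I : Type} (le : I -> I -> Prop)
  (D : I -> form S -> Prop) : Prop :=
  forall theta, limsup le D theta <-> liminf le D theta.

(* Main.v *)
Require Import Defs.
From Stdlib Require Import List Classical.
Import ListNotations.

Theorem lemma2p2 (S : signature) (I : Type) (le : I -> I -> Prop)
  (D : I -> form S -> Prop)
  (HI : directed_set I le) (Hne : inhabited I)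
  (Hth : forall i, is_theory S (D i))
  (Hcons : forall i, consistent S (D i))
  (Hcomp : forall i, complete S (D i)) :
  consistent S (liminf le D) /\ complete S (limsup le D) /\
  (consistent S (limsup le D) <-> complete S (liminf le D)) /\
  (complete S (liminf le D) <-> lim_exists le D).
Proof.
  destruct HI as [Hrefl [Htrans [_ Hub]]].
  assert (Hboth : forall j th, D j th -> D j (Neg S th) -> False).
  { intros j th H1 H2. apply (Hcons j). exists [th; Neg S th]. split.
    - intros p [<-|[<-|[]]]; assumption.
    - apply (ImpE _ _ th); apply Ctx; simpl; auto. }
  assert (Hneg : forall j th, sentence S th -> ~ D j th -> D j (Neg S th)).
  { intros j th Hs Hn. destruct (Hcomp j th Hs); tauto. }
  assert (Hsn : forall th, sentence S th -> sentence S (Neg S th)).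
  { intros th Hs. unfold sentence, Neg in *; simpl; auto. }
  assert (Hclash : forall th, liminf le D (Neg S th) -> limsup le D th -> False).
  { intros th [_ [i Hi]] [_ Hf]. destruct (Hf i) as [j [Hij Hj]].
    exact (Hboth j th Hj (Hi j Hij)). }
  assert (Hfin : forall L, (forall p, In p L -> liminf le D p) ->
            exists i, forall j, le i j -> forall p, In p L -> D j p).
  { induction L as [|a L IH]; intros HL.
    - destruct Hne as [i0]. exists i0. intros j _ p [].
    - destruct IH as [i Hi]. { intros p Hp. apply HL. simpl; auto. }
      destruct (HL a (or_introl eq_refl)) as [_ [i1 Hi1]].
      destruct (Hub i i1) as [k [Hk1 Hk2]]. exists k.
      intros j Hkj p [<-|Hp].
      + apply Hi1. eauto.
      + apply (Hi j); eauto. }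
  assert (P1 : consistent S (liminf le D)).
  { intros [L [HL Hp]]. destruct (Hfin L HL) as [i Hi].
    apply (Hcons i). exists L. split; auto. }
  assert (P2 : complete S (limsup le D)).
  { intros th Hs. destruct (classic (forall i, exists j, le i j /\ D j th)) as [H|H].
    - left. split; auto.
    - right. split; [apply Hsn; auto|].
      apply not_all_ex_not in H. destruct H as [i0 H0].
      intros i. destruct (Hub i i0) as [k [Hk1 Hk2]]. exists k. split; auto.
      apply Hneg; auto. intros Hk. apply H0. exists k; auto. }
  assert (Hinfsup : forall th, liminf le D th -> limsup le D th).
  { intros th [Hs [i0 H0]]. split; auto. intros i.
    destruct (Hub i i0) as [k [Hk1 Hk2]]. exists k; auto. }
  split; [exact P1|]. split; [exact P2|]. split.
  - split.
    + intros Hc th Hs.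
      destruct (classic (liminf le D th)) as [H1|H1]; [left; auto|].
      destruct (classic (liminf le D (Neg S th))) as [H2|H2]; [right; auto|].
      exfalso. apply Hc. exists [th; Neg S th]. split.
      * intros p [<-|[<-|[]]].
        -- split; auto. intros i. apply NNPP. intros Hn. apply H2.
           split; [apply Hsn; auto|]. exists i. intros j Hij.
           apply Hneg; auto. intros Hj. apply Hn. exists j; auto.
        -- split; [apply Hsn; auto|]. intros i. apply NNPP. intros Hn. apply H1.
           split; auto. exists i. intros j Hij.
           apply NNPP. intros Hj. apply Hn. exists j. split; auto.
      * apply (ImpE _ _ th); apply Ctx; simpl; auto.
    + intros Hc [L [HL Hp]]. apply P1. exists L. split; auto.
      intros p Hp'. destruct (HL p Hp') as [Hs Hf] eqn:E.
      destruct (Hc p Hs) as [H|H]; auto.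
      exfalso. apply (Hclash p H (HL p Hp')).
  - split.
    + intros Hc th. split; [|apply Hinfsup].
      intros Hsup. destruct Hsup as [Hs Hf] eqn:E.
      destruct (Hc th Hs) as [H|H]; auto.
      exfalso. exact (Hclash th H Hsup).
    + intros Hl th Hs. destruct (P2 th Hs) as [H|H]; [left|right]; apply Hl; auto.
Qed.
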